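(* Let $0\le k<n$ and let $U\subset Gr(k,n)$. If $U$ is open, then $\bigcup_{\ell\in U}\ell$ is an open subset of $\mathbb{P}^n_{\mathbb{C}}$; if $U$ is closed, then $\bigcup_{\ell\in U}\ell$ is a closed subset of $\mathbb{P}^n_{\mathbb{C}}$.
   Context: $Gr(k,n)$ is the Grassmannian of $k$-dimensional projective subspaces of $\mathbb{P}^n_{\mathbb{C}}$, topologized by the Hausdorff metric on closed subsets of $\mathbb{P}^n_{\mathbb{C}}$ induced by the Fubini–Study metric (equivalently via the Plücker embedding into $\mathbb{P}(\bigwedge^{k+1}\mathbb{C}^{n+1})$). *)

(* Defs.v *)
From HB Require Import structures.
From mathcomp Require Import all_boot all_order all_algebra.
From mathcomp Require Import all_classical all_reals all_analysis.
From mathcomp Require Import complex.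
Set Implicit Arguments. Unset Strict Implicit. Unset Printing Implicit Defensive.
Import Order.TTheory GRing.Theory Num.Theory.
Local Open Scope ring_scope.
Local Open Scope classical_set_scope.

(* Vectors of C^(n+1) are row vectors 'rV[R[i]]_n.+1; a point of P^n is
   represented by any nonzero vector of the corresponding line. *)

Definition hprod (R : realType) (m : nat) (u v : 'rV[R[i]]_m) : R[i] :=
  \sum_(j < m) u ord0 j * complex.conjc (v ord0 j).

Definition vnorm (R : realType) (m : nat) (u : 'rV[R[i]]_m) : R :=
  Num.sqrt (complex.ComplexField.Normc.normc (hprod u u)).

Definition dFS (R : realType) (m : nat) (u v : 'rV[R[i]]_m) : R :=
  acos (complex.ComplexField.Normc.normc (hprod u v) / (vnorm u * vnorm v)).

(* Subsets of P^n are represented by sets of nonzero vectors that are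
   invariant under nonzero scalings (cones without 0). *)
Definition PSubset (R : realType) (m : nat) (A : set 'rV[R[i]]_m) : Prop :=
  (forall v, A v -> v != 0) /\ (forall v c, A v -> c != 0 -> A (c *: v)).

Definition PS_open (R : realType) (m : nat) (A : set 'rV[R[i]]_m) : Prop :=
  forall v, A v -> exists2 e : R, 0 < e &
    forall w, w != 0 -> dFS v w < e -> A w.

Definition PS_closed (R : realType) (m : nat) (A : set 'rV[R[i]]_m) : Prop :=
  PS_open [set w | w != 0 /\ ~ A w].

(* Gr(k,n): projective k-planes of P^n = (k+1)-dim linear subspaces of C^(n+1). *)
Definition isGr (R : realType) (k n : nat) (L : {vspace 'rV[R[i]]_n.+1}) : Prop :=
  \dim L = k.+1.
Arguments isGr : clear implicits.

Definition dist_pt (R : realType) (m : nat) (x : 'rV[R[i]]_m)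
  (L : {vspace 'rV[R[i]]_m}) : R :=
  inf [set dFS x y | y in [set y | (y \in L) /\ y != 0]].

Definition dHaus (R : realType) (m : nat) (L M : {vspace 'rV[R[i]]_m}) : R :=
  Num.max (sup [set dist_pt x M | x in [set x | (x \in L) /\ x != 0]])
          (sup [set dist_pt y L | y in [set y | (y \in M) /\ y != 0]]).

Definition Gr_open (R : realType) (k n : nat)
  (U : set {vspace 'rV[R[i]]_n.+1}) : Prop :=
  forall L, U L -> exists2 e : R, 0 < e &
    forall M, isGr R k n M -> dHaus L M < e -> U M.
Arguments Gr_open : clear implicits.

Definition Gr_closed (R : realType) (k n : nat)
  (U : set {vspace 'rV[R[i]]_n.+1}) : Prop :=
  Gr_open R k n [set M | isGr R k n M /\ ~ U M].
Arguments Gr_closed : clear implicits.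

Definition Gr_union (R : realType) (n : nat)
  (U : set {vspace 'rV[R[i]]_n.+1}) : set 'rV[R[i]]_n.+1 :=
  [set v | v != 0 /\ exists2 L, U L & v \in L].

(* Main.v *)
Require Import Defs.
From HB Require Import structures.
From mathcomp Require Import all_boot all_order all_algebra.
From mathcomp Require Import all_classical all_reals all_analysis.
From mathcomp Require Import complex.
Local Open Scope ring_scope.
Local Open Scope classical_set_scope.
From mathcomp Require Import lra ring.

Module Dev.
Import Order.TTheory GRing.Theory Num.Theory.
Local Close Scope classical_set_scope.
Local Open Scope complex_scope.
Set Implicit Arguments. Unset Strict Implicit. Unset Printing Implicit Defensive.

Section Scal.
Variable R : realType.
Implicit Types (z w : R[i]) (r : R).
Local Notation cab := (@ComplexField.Normc.normc R).

Lemma cabE z : `|z| = (cab z)%:C.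
Proof. by case: z => a b; rewrite normc_def. Qed.

Lemma cab_ge0 z : 0 <= cab z.
Proof. by case: z => a b; rewrite /= sqrtr_ge0. Qed.

Lemma cabM z w : cab (z * w) = cab z * cab w.
Proof. exact: ComplexField.Normc.normcM. Qed.

Lemma cabD z w : cab (z + w) <= cab z + cab w.
Proof. exact: le_normcD. Qed.

Lemma cabJ z : cab (conjc z) = cab z.
Proof. by case: z => a b /=; rewrite sqrrN. Qed.

Lemma cab0 : cab 0 = 0.
Proof. exact: ComplexField.Normc.normc0. Qed.

Lemma cab_eq0 z : cab z = 0 -> z = 0.
Proof. exact: ComplexField.Normc.eq0_normc. Qed.

Lemma cabN z : cab (- z) = cab z.
Proof. exact: normcN. Qed.

Lemma cabR r : cab (r%:C) = `|r|.
Proof. by rewrite /= expr0n /= addr0 sqrtr_sqr. Qed.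

Lemma cab_sq z : cab z ^+ 2 = complex.Re z ^+ 2 + complex.Im z ^+ 2.
Proof. by case: z => a b /=; rewrite sqr_sqrtr // addr_ge0 // sqr_ge0. Qed.

Lemma mulJ z : z * conjc z = ((cab z) ^+ 2)%:C.
Proof.
rewrite cab_sq; case: z => a b /=; apply/eqP; rewrite eq_complex /=.
apply/andP; split; apply/eqP; ring.
Qed.

Lemma ReLe z : complex.Re z <= cab z.
Proof.
have h := cab_sq z; have h0 := cab_ge0 z.
have : complex.Re z ^+ 2 <= cab z ^+ 2 by rewrite h lerDl sqr_ge0.
move=> h2; nra.
Qed.

Lemma absReLe z : `|complex.Re z| <= cab z.
Proof.
have h := cab_sq z; have h0 := cab_ge0 z.
have : complex.Re z ^+ 2 <= cab z ^+ 2 by rewrite h lerDl sqr_ge0.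
move=> h2; rewrite ler_norml; apply/andP; split; nra.
Qed.

Lemma absImLe z : `|complex.Im z| <= cab z.
Proof.
have h := cab_sq z; have h0 := cab_ge0 z.
have : complex.Im z ^+ 2 <= cab z ^+ 2 by rewrite h lerDr sqr_ge0.
move=> h2; rewrite ler_norml; apply/andP; split; nra.
Qed.

Lemma cabV z : cab (z^-1) = (cab z)^-1.
Proof. exact: ComplexField.Normc.normcV. Qed.

Lemma cab1 : cab 1 = 1.
Proof. exact: ComplexField.Normc.normc1. Qed.

Lemma cab_sum (I : Type) (s : seq I) (P : pred I) (F : I -> R[i]) :
  cab (\sum_(i <- s | P i) F i) <= \sum_(i <- s | P i) cab (F i).
Proof.
elim/big_rec2: _ => [|i y x _ h]; first by rewrite cab0.
by apply: le_trans (cabD _ _) _; rewrite lerD2l.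
Qed.

Lemma sq_inj (x y : R) : 0 <= x -> 0 <= y -> x ^+ 2 = y ^+ 2 -> x = y.
Proof. by move=> hx hy /eqP; rewrite eqrXn2 // => /eqP. Qed.

Lemma sq_le (x y : R) : 0 <= x -> 0 <= y -> x ^+ 2 <= y ^+ 2 -> x <= y.
Proof. by move=> hx hy; rewrite ler_pXn2r // ?nnegrE. Qed.

End Scal.

Section Vec.
Variable R : realType.
Variable m : nat.
Local Notation V := 'rV[R[i]]_m.
Local Notation cab := (@ComplexField.Normc.normc R).
Local Notation ip := (@hprod R m).
Local Notation nm := (@vnorm R m).
Implicit Types (u v w : V) (a b : R[i]).

Lemma ipDl u v w : ip (u + v) w = ip u w + ip v w.
Proof. by rewrite /hprod -big_split; apply: eq_bigr => j _; rewrite !mxE mulrDl. Qed.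

Lemma ipZl a u w : ip (a *: u) w = a * ip u w.
Proof. by rewrite /hprod mulr_sumr; apply: eq_bigr => j _; rewrite !mxE mulrA. Qed.

Lemma ipJ u v : conjc (ip u v) = ip v u.
Proof.
rewrite /hprod rmorph_sum; apply: eq_bigr => j _.
by rewrite rmorphM /= conjcK mulrC.
Qed.

Lemma ipDr u v w : ip w (u + v) = ip w u + ip w v.
Proof. by rewrite -ipJ ipDl rmorphD /= !ipJ. Qed.

Lemma ipZr a u w : ip w (a *: u) = conjc a * ip w u.
Proof. by rewrite -ipJ ipZl rmorphM /= !ipJ. Qed.

Lemma ip0l w : ip 0 w = 0.
Proof. by rewrite /hprod big1 // => j _; rewrite mxE mul0r. Qed.

Lemma ip0r w : ip w 0 = 0.
Proof. by rewrite -ipJ ip0l rmorph0. Qed.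

Lemma ipNl u w : ip (- u) w = - ip u w.
Proof. by rewrite -scaleN1r ipZl mulN1r. Qed.

Lemma ipNr u w : ip w (- u) = - ip w u.
Proof. by rewrite -ipJ ipNl rmorphN /= ipJ. Qed.

Lemma ipBl u v w : ip (u - v) w = ip u w - ip v w.
Proof. by rewrite ipDl ipNl. Qed.

Lemma ipBr u v w : ip w (u - v) = ip w u - ip w v.
Proof. by rewrite ipDr ipNr. Qed.

Lemma ip_suml (I : Type) (s : seq I) (P : pred I) (F : I -> V) w :
  ip (\sum_(i <- s | P i) F i) w = \sum_(i <- s | P i) ip (F i) w.
Proof. by elim/big_rec2: _ => [|i y x _ h]; rewrite ?ip0l // ipDl h. Qed.

Lemma ip_sumr (I : Type) (s : seq I) (P : pred I) (F : I -> V) w :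
  ip w (\sum_(i <- s | P i) F i) = \sum_(i <- s | P i) ip w (F i).
Proof. by elim/big_rec2: _ => [|i y x _ h]; rewrite ?ip0r // ipDr h. Qed.

Definition nq u := \sum_(j < m) cab (u ord0 j) ^+ 2.

Lemma nq_ge0 u : 0 <= nq u.
Proof. by apply: sumr_ge0 => j _; rewrite sqr_ge0. Qed.

Lemma ipuu_nq u : ip u u = (nq u)%:C.
Proof. by rewrite /hprod /nq rmorph_sum; apply: eq_bigr => j _; rewrite mulJ. Qed.

Lemma nmE u : nm u = Num.sqrt (nq u).
Proof. by rewrite /vnorm ipuu_nq cabR ger0_norm // nq_ge0. Qed.

Lemma nm_ge0 u : 0 <= nm u.
Proof. by rewrite nmE sqrtr_ge0. Qed.

Lemma nm2 u : nm u ^+ 2 = nq u.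
Proof. by rewrite nmE sqr_sqrtr // nq_ge0. Qed.

Lemma ipuu u : ip u u = (nm u ^+ 2)%:C.
Proof. by rewrite nm2 ipuu_nq. Qed.

Lemma nm_eq0 u : nm u = 0 -> u = 0.
Proof.
move=> h; have : nq u = 0 by rewrite -nm2 h expr0n.
move/eqP; rewrite psumr_eq0 => [/allP hu|j _]; last by rewrite sqr_ge0.
apply/rowP => j; rewrite mxE; apply: cab_eq0.
have /hu : j \in index_enum 'I_m by rewrite mem_index_enum.
by rewrite /= sqrf_eq0 => /eqP.
Qed.

Lemma nm0 : nm 0 = 0.
Proof. by rewrite /vnorm ip0l cab0 sqrtr0. Qed.

Lemma nm_gt0 u : u != 0 -> 0 < nm u.
Proof.
move=> hu; rewrite lt_def nm_ge0 andbT; apply/eqP => /nm_eq0 h.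
by rewrite h eqxx in hu.
Qed.

Lemma Cinj (x y : R) : x%:C = y%:C -> x = y.
Proof. by case. Qed.

Lemma nmZ a u : nm (a *: u) = cab a * nm u.
Proof.
apply: sq_inj; rewrite ?mulr_ge0 ?nm_ge0 ?cab_ge0 //.
apply: Cinj; rewrite -ipuu ipZl ipZr mulrA mulJ ipuu -rmorphM /=.
by rewrite exprMn.
Qed.

Lemma nmN u : nm (- u) = nm u.
Proof. by rewrite -scaleN1r nmZ cabN cab1 mul1r. Qed.

Lemma nmB_sym u v : nm (u - v) = nm (v - u).
Proof. by rewrite -nmN opprB. Qed.

Lemma Re_ipuu u : complex.Re (ip u u) = nm u ^+ 2.
Proof. by rewrite ipuu. Qed.

Lemma nmD2 u v : nm (u + v) ^+ 2 = nm u ^+ 2 + nm v ^+ 2 + 2 * complex.Re (ip u v).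
Proof.
rewrite -!Re_ipuu ipDl !ipDr -[ip v u]ipJ.
case: (ip u u) (ip u v) (ip v v) => a1 b1 [a2 b2] [a3 b3] /=; ring.
Qed.

Lemma nmB2 u v : nm (u - v) ^+ 2 = nm u ^+ 2 + nm v ^+ 2 - 2 * complex.Re (ip u v).
Proof.
rewrite nmD2 nmN ipNr.
by case: (ip u v) => a b /=; ring.
Qed.

Lemma CS u v : cab (ip u v) <= nm u * nm v.
Proof.
have [->|hv] := eqVneq v 0; first by rewrite ip0r cab0 nm0 mulr0.
have nv := nm_gt0 hv.
set p := ip u v.
set c := p / ((nm v ^+ 2)%:C).
have hcab : cab c = cab p / nm v ^+ 2.
  by rewrite /c cabM cabV cabR ger0_norm // sqr_ge0.
have hJ : conjc c = conjc p / (nm v ^+ 2)%:C.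
  by rewrite /c rmorphM fmorphV; congr (_ * _^-1); exact: conjc_real.
have hip : ip u (c *: v) = ((cab p ^+ 2) / nm v ^+ 2)%:C.
  rewrite ipZr hJ -/p mulrAC [conjc p * p]mulrC mulJ.
  by rewrite -(fmorphV (real_complex R)) -rmorphM.
have := nmB2 u (c *: v); rewrite nmZ hip /= hcab.
have h0 := sqr_ge0 (nm (u - c *: v)).
move=> e; rewrite e in h0.
have hpos : 0 < nm v ^+ 2 by rewrite exprn_gt0.
have : cab p ^+ 2 <= (nm u * nm v) ^+ 2.
  rewrite exprMn.
  have -> : cab p ^+ 2 = (cab p ^+ 2 / nm v ^+ 2) * nm v ^+ 2.
    by rewrite divfK // gt_eqF.
  rewrite ler_pM2r //.
  move: h0; rewrite exprMn.
  have -> : (cab p / nm v ^+ 2) ^+ 2 * nm v ^+ 2 = cab p ^+ 2 / nm v ^+ 2.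
    by field; rewrite gt_eqF.
  lra.
by apply: sq_le; rewrite ?mulr_ge0 ?nm_ge0 ?cab_ge0.
Qed.

End Vec.

Section Vec2.
Variable R : realType.
Variable m : nat.
Local Notation V := 'rV[R[i]]_m.
Local Notation cab := (@ComplexField.Normc.normc R).
Local Notation ip := (@hprod R m).
Local Notation nm := (@vnorm R m).
Implicit Types (u v w : V) (a b : R[i]).

Lemma nmD u v : nm (u + v) <= nm u + nm v.
Proof.
apply: sq_le; rewrite ?addr_ge0 ?nm_ge0 //.
rewrite nmD2 sqrrD.
have := ReLe (ip u v); have := CS u v; lra.
Qed.

Lemma nm_sum (I : Type) (s : seq I) (P : pred I) (F : I -> V) :
  nm (\sum_(i <- s | P i) F i) <= \sum_(i <- s | P i) nm (F i).
Proof.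
elim/big_rec2: _ => [|i y x _ h]; first by rewrite nm0.
by apply: le_trans (nmD _ _) _; rewrite lerD2l.
Qed.

Lemma cabB_ge a b : cab a - cab b <= cab (a - b).
Proof. have := cabD (a - b) b; rewrite subrK; lra. Qed.

Lemma entry_le u j : cab (u ord0 j) <= nm u.
Proof.
apply: sq_le; rewrite ?cab_ge0 ?nm_ge0 // nm2 /nq (bigD1 j) //=.
by rewrite lerDl sumr_ge0 // => i _; rewrite sqr_ge0.
Qed.

Lemma nm_le_of_nq u t : 0 <= t -> nq u <= t ^+ 2 -> nm u <= t.
Proof. by move=> t0 h; apply: sq_le; rewrite ?nm_ge0 // nm2. Qed.

Definition cs u v := cab (ip u v) / (nm u * nm v).

Lemma dFSE u v : dFS u v = acos (cs u v).
Proof. by []. Qed.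

Lemma cabipC u v : cab (ip u v) = cab (ip v u).
Proof. by rewrite -ipJ cabJ. Qed.

Lemma cs_sym u v : cs u v = cs v u.
Proof. by rewrite /cs (cabipC u v) [nm u * _]mulrC. Qed.

Lemma cs_ge0 u v : 0 <= cs u v.
Proof. by rewrite /cs divr_ge0 ?mulr_ge0 ?nm_ge0 ?cab_ge0. Qed.

Lemma cs_le1 u v : u != 0 -> v != 0 -> cs u v <= 1.
Proof.
move=> hu hv; rewrite /cs ler_pdivrMr ?mulr_gt0 ?nm_gt0 // mul1r.
exact: CS.
Qed.

Lemma cs_close u v s : u != 0 -> 0 <= s < 1 -> nm (u - v) <= s * nm u ->
  v != 0 /\ (1 - s) / (1 + s) <= cs u v.
Proof.
move=> hu /andP[s0 s1] huv.
have x0 := nm_gt0 hu.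
have hv : nm v <= (1 + s) * nm u.
  have := nmD u (v - u); rewrite addrC subrK nmB_sym; lra.
have hc : (1 - s) * nm u ^+ 2 <= cab (ip u v).
  have e : ip u v = ip u u - ip u (u - v) by rewrite ipBr opprB addrC subrK.
  rewrite e; apply: le_trans (cabB_ge _ _).
  rewrite ipuu cabR ger0_norm ?sqr_ge0 //.
  have := CS u (u - v); have := nm_ge0 (u - v); nra.
have vnz : v != 0.
  apply/eqP => v0; move: hc; rewrite v0 ip0r cab0.
  have : 0 < (1 - s) * nm u ^+ 2 by rewrite mulr_gt0 ?exprn_gt0 // subr_gt0.
  lra.
split => //.
have y0 := nm_gt0 vnz.
have hs : 0 < 1 + s by lra.
have h1 : 0 <= 1 - s by lra.
have h2 : nm u * nm v <= nm u * ((1 + s) * nm u) by apply: ler_wpM2l; [exact: ltW|].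
have key : (1 - s) * (nm u * nm v) <= cab (ip u v) * (1 + s) by nra.
rewrite /cs ler_pdivrMr // mulrAC ler_pdivlMr // mulr_gt0 //.
Qed.

End Vec2.

Section AcosL.
Variable R : realType.

Lemma acos_in (x : R) : -1 <= x <= 1 -> acos x \in `[0, pi].
Proof. by move=> h; rewrite in_itv /= acos_ge0 // acos_lepi. Qed.

Lemma acos_ltanti (x y : R) : -1 <= x -> x < y -> y <= 1 -> acos y < acos x.
Proof.
move=> h1 h2 h3.
have hx : -1 <= x <= 1 by rewrite h1 /= (le_trans (ltW h2) h3).
have hy : -1 <= y <= 1 by rewrite h3 andbT (le_trans h1 (ltW h2)).
have := ltr_cos (acos_in hy) (acos_in hx).
by rewrite !acosK ?in_itv //= => <-.
Qed.

Lemma acos_anti (x y : R) : -1 <= x -> x <= y -> y <= 1 -> acos y <= acos x.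
Proof.
move=> h1 h2 h3; move: h2; rewrite le_eqVlt => /orP[/eqP->//|h2].
exact/ltW/acos_ltanti.
Qed.

Lemma acos_small (e : R) : 0 < e -> exists c : R, [/\ -1 <= c, c < 1 &
  forall x, c < x -> x <= 1 -> acos x < e].
Proof.
move=> e0; pose t := Num.min e pi.
have t0 : 0 < t by rewrite lt_min e0 pi_gt0.
have tpi : t \in `[0, pi] by rewrite in_itv /= ltW // ge_min lexx orbT.
exists (cos t); split; rewrite ?cos_geN1 //.
  rewrite lt_neqAle cos_le1 andbT; apply/eqP => h.
  by move: (cosK tpi); rewrite h acos1 => ht; rewrite -ht ltxx in t0.
move=> x hx h1.
apply: (lt_le_trans (acos_ltanti (cos_geN1 t) hx h1)).
by rewrite cosK // ge_min lexx.
Qed.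

End AcosL.

Section Frame.
Variable R : realType.
Variable m p : nat.
Local Notation V := 'rV[R[i]]_m.
Local Notation cab := (@ComplexField.Normc.normc R).
Local Notation ip := (@hprod R m).
Local Notation nm := (@vnorm R m).
Implicit Types (u v w x y : V) (a b : R[i]).

Definition ortho (F : 'I_p -> V) := forall i j, ip (F i) (F j) = (i == j)%:R.
Definition spanF (F : 'I_p -> V) : {vspace V} := <<[tuple F i | i < p]>>%VS.

Variable F : 'I_p -> V.
Hypothesis hF : ortho F.

Lemma ortho_nm i : nm (F i) = 1.
Proof.
apply: sq_inj; rewrite ?nm_ge0 ?ler01 // expr1n; apply: Cinj.
by rewrite -ipuu hF eqxx.
Qed.

Lemma ortho_coef (c : 'I_p -> R[i]) j : ip (\sum_i c i *: F i) (F j) = c j.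
Proof.
rewrite ip_suml (bigD1 j) //= big1 ?addr0 => [|i hij]; first by rewrite ipZl hF eqxx mulr1.
by rewrite ipZl hF (negbTE hij) mulr0.
Qed.

Lemma ortho_ipr (c : 'I_p -> R[i]) w :
  ip w (\sum_i c i *: F i) = \sum_i conjc (c i) * ip w (F i).
Proof. by rewrite ip_sumr; apply: eq_bigr => i _; rewrite ipZr. Qed.

Lemma ortho_nm2 (c : 'I_p -> R[i]) : nm (\sum_i c i *: F i) ^+ 2 = \sum_i cab (c i) ^+ 2.
Proof.
apply: Cinj; rewrite -ipuu rmorph_sum /=.
rewrite {1}ip_suml; apply: eq_bigr => i _.
by rewrite ipZl -ipJ ortho_coef mulJ.
Qed.

Lemma ortho_cab_le (c : 'I_p -> R[i]) j : cab (c j) <= nm (\sum_i c i *: F i).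
Proof.
rewrite -{1}(ortho_coef c j); apply: le_trans (CS _ _) _.
by rewrite ortho_nm mulr1.
Qed.

Lemma spanF_nth (i : 'I_p) : [tuple F i | i < p]`_i = F i.
Proof. by rewrite nth_mktuple. Qed.

Lemma spanF_mem (c : 'I_p -> R[i]) : \sum_i c i *: F i \in spanF F.
Proof.
apply: memv_suml => i _; apply: memvZ; apply: memv_span.
by rewrite -tnth_mktuple mem_tnth.
Qed.

Lemma spanF_F i : F i \in spanF F.
Proof. by rewrite -tnth_mktuple; apply: memv_span; rewrite mem_tnth. Qed.

Lemma spanF_repr y : y \in spanF F -> y = \sum_i ip y (F i) *: F i.
Proof.
move=> /coord_span e.
have e2 : y = \sum_i coord [tuple F i | i < p] i y *: F i.
  by rewrite {1}e; apply: eq_bigr => i _; rewrite spanF_nth.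
rewrite {1}e2; apply eq_bigr => i _; congr (_ *: _).
by rewrite [in RHS]e2 ortho_coef.
Qed.

Lemma ortho_free : free [tuple F i | i < p].
Proof.
apply/freeP => c hc i.
have : \sum_i c i *: F i = 0.
  by rewrite -[RHS]hc; apply: eq_bigr => j _; rewrite spanF_nth.
by move=> /(congr1 (fun z => ip z (F i))); rewrite ortho_coef ip0l.
Qed.

Lemma ortho_dim : \dim (spanF F) = p.
Proof. by have := ortho_free; rewrite /free size_tuple => /eqP. Qed.

End Frame.

Section GS.
Variable R : realType.
Variable m : nat.
Local Notation V := 'rV[R[i]]_m.
Local Notation cab := (@ComplexField.Normc.normc R).
Local Notation ip := (@hprod R m).
Local Notation nm := (@vnorm R m).
Implicit Types (u v w x y : V).

Definition orthoS (t : seq V) := uniq t /\ {in t &, forall a b, ip a b = (a == b)%:R}.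

Lemma GS_seq (s : seq V) : free s ->
  exists t, [/\ size t = size s, (span t = span s) & orthoS t].
Proof.
elim: s => [_|x s IH]; first by exists [::]; split => //; split => // a b.
rewrite free_cons => /andP[xs /IH [t [st spt [ut ot]]]].
pose z := \sum_(y <- t) ip x y *: y.
have zt : z \in <<t>>%VS.
  by rewrite /z big_seq; apply: memv_suml => y yt; apply: memvZ; apply: memv_span.
have ipz a : a \in t -> ip z a = ip x a.
  move=> at_; rewrite /z ip_suml (bigD1_seq a) //= big1_seq ?addr0.
    by rewrite ipZl (ot a a) // eqxx mulr1.
  by move=> y /andP[hy yt]; rewrite ipZl (ot y a) // (negbTE hy) mulr0.
pose r := x - z.
have ipr a : a \in t -> ip r a = 0 by move=> at_; rewrite /r ipBl ipz // subrr.
have rnz : r != 0.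
  apply/eqP => r0; move: xs; rewrite -spt.
  have -> : x = z by apply/eqP; rewrite -subr_eq0 -/r r0.
  by rewrite zt.
have nr := nm_gt0 rnz.
pose c := ((nm r)^-1)%:C.
pose f := c *: r.
have ipf a : a \in t -> ip f a = 0 by move=> at_; rewrite /f ipZl ipr // mulr0.
have ipf' a : a \in t -> ip a f = 0 by move=> at_; rewrite -ipJ ipf // conjc0.
have ipff : ip f f = 1.
  rewrite /f ipZl ipZr mulrA mulJ ipuu /c cabR ger0_norm ?invr_ge0 ?nm_ge0 //.
  by rewrite -rmorphM -exprMn mulVf ?gt_eqF // expr1n.
have ft : f \notin t.
  apply/negP => /ipf; rewrite ipff => /eqP; by rewrite oner_eq0.
exists (f :: t); split; first by rewrite /= st.
- rewrite !span_cons; apply/subv_anti/andP; split; rewrite subv_add; apply/andP; split.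
  + rewrite -memvE /f; apply: memvZ; rewrite /r; apply: memvB.
      by apply: (subvP (addvSl _ _)); exact: memv_line.
    by apply: (subvP (addvSr _ _)); rewrite -spt.
  + by rewrite spt addvSr.
  + rewrite -memvE.
    have -> : x = (nm r)%:C *: f + z.
      rewrite /f scalerA /c -rmorphM /= divff ?gt_eqF // scale1r /r.
      by rewrite subrK.
    by apply: memv_add; [apply: memvZ; exact: memv_line | exact: zt].
  + by rewrite -spt addvSr.
- split; first by rewrite /= ft ut.
  move=> a b; rewrite !inE => /orP[/eqP->|ha] /orP[/eqP->|hb].
  + by rewrite ipff eqxx.
  + by rewrite ipf //; case: eqP => // e; move: ft; rewrite e hb.
  + by rewrite ipf' //; case: eqP => // e; move: ft; rewrite -e ha.
  + exact: ot.
Qed.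
End GS.

Lemma GS_frame (R : realType) (m : nat) (L : {vspace 'rV[R[i]]_m}) :
  exists F : 'I_(\dim L) -> 'rV[R[i]]_m, ortho F /\ spanF F = L.
Proof.
have hb := vbasisP L.
have [t [st spt [ut ot]]] := GS_seq (basis_free hb).
rewrite size_tuple in st.
pose F (i : 'I_(\dim L)) := t`_i.
have hF : ortho F.
  move=> i j; rewrite /F ot ?mem_nth ?st //.
  by rewrite nth_uniq ?st.
exists F; split => //.
apply/eqP; rewrite eqEdim ortho_dim // leqnn andbT.
apply/span_subvP => y /mapP [i _ ->].
by rewrite -(span_basis hb) -spt memv_span // mem_nth ?st.
Qed.

Lemma GS_frame' (R : realType) (m d : nat) (L : {vspace 'rV[R[i]]_m}) :
  \dim L = d -> exists F : 'I_d -> 'rV[R[i]]_m, ortho F /\ spanF F = L.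
Proof. by move=> <-; exact: GS_frame. Qed.

Section Haus.
Variable R : realType.
Variable m : nat.
Local Notation V := 'rV[R[i]]_m.
Local Notation cab := (@ComplexField.Normc.normc R).
Local Notation ip := (@hprod R m).
Local Notation nm := (@vnorm R m).

Lemma cs_in (x y : V) : x != 0 -> y != 0 -> -1 <= cs x y <= 1.
Proof.
move=> hx hy; rewrite cs_le1 // andbT.
by apply: le_trans (cs_ge0 x y); rewrite lerN10.
Qed.

Lemma dFS_ge0 (x y : V) : x != 0 -> y != 0 -> 0 <= dFS x y.
Proof. by move=> hx hy; rewrite dFSE acos_ge0 // cs_in. Qed.

Lemma dFS_sym (x y : V) : dFS x y = dFS y x.
Proof. by rewrite !dFSE cs_sym. Qed.

Lemma dist_pt_le (x y : V) (M : {vspace V}) : x != 0 -> y \in M -> y != 0 ->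
  dist_pt x M <= dFS x y.
Proof.
move=> hx yM hy; rewrite /dist_pt.
apply: ge_inf; last by exists y.
exists 0 => _ [z [zM hz] <-]; exact: dFS_ge0.
Qed.

Lemma dHaus_le (L M : {vspace V}) (phi : R) :
  (exists x, x \in L /\ x != 0) -> (exists y, y \in M /\ y != 0) ->
  (forall x, x \in L -> x != 0 -> exists y, [/\ y \in M, y != 0 & dFS x y <= phi]) ->
  (forall y, y \in M -> y != 0 -> exists x, [/\ x \in L, x != 0 & dFS y x <= phi]) ->
  dHaus L M <= phi.
Proof.
move=> [x0 [x0L x0n]] [y0 [y0M y0n]] h1 h2.
rewrite /dHaus ge_max; apply/andP; split; apply: ge_sup.
- by exists (dist_pt x0 M); exists x0.
- move=> _ [x [xL xn] <-]; have [y [yM yn hy]] := h1 x xL xn.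
  exact: le_trans (dist_pt_le xn yM yn) hy.
- by exists (dist_pt y0 L); exists y0.
- move=> _ [y [yM yn] <-]; have [x [xL xn hx]] := h2 y yM yn.
  exact: le_trans (dist_pt_le yn xL xn) hx.
Qed.

End Haus.

Section Perturb.
Variable R : realType.
Variable m p : nat.
Local Notation V := 'rV[R[i]]_m.
Local Notation cab := (@ComplexField.Normc.normc R).
Local Notation ip := (@hprod R m).
Local Notation nm := (@vnorm R m).

Definition phi (s : R) := acos ((1 - s) / (1 + s)).

Lemma close_dFS (x y : V) (s : R) : x != 0 -> 0 <= s < 1 -> nm (x - y) <= s * nm x ->
  y != 0 /\ dFS x y <= phi s.
Proof.
move=> hx hs hxy; have [hy hc] := cs_close hx hs hxy.
split => //; rewrite dFSE /phi; apply: acos_anti => //; last exact: cs_le1.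
case/andP: hs => s0 s1.
have h : 0 <= (1 - s) / (1 + s) by rewrite divr_ge0 //; lra.
by apply: le_trans h; rewrite lerN10.
Qed.

Variables (F G : 'I_p -> V) (tau : R).
Hypotheses (hF : ortho F) (tau0 : 0 <= tau) (hG : forall i, nm (G i - F i) <= tau)
  (hs : p%:R * tau < 1).

Lemma pert_core (c : 'I_p -> R[i]) :
  nm (\sum_i c i *: F i - \sum_i c i *: G i) <= p%:R * tau * nm (\sum_i c i *: F i).
Proof.
rewrite -sumrB; apply: le_trans (nm_sum _ _ _) _.
have -> : p%:R * tau * nm (\sum_i c i *: F i) = \sum_(i < p) (nm (\sum_i c i *: F i) * tau).
  by rewrite sumr_const card_ord -mulr_natl; ring.
apply: ler_sum => i _; rewrite -scalerBr nmZ nmB_sym.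
apply: ler_pM; rewrite ?cab_ge0 ?nm_ge0 //; exact: ortho_cab_le.
Qed.

Let s0 : 0 <= p%:R * tau < 1.
Proof. by rewrite hs andbT mulr_ge0. Qed.

Lemma pert_free : free [tuple G i | i < p].
Proof.
apply/freeP => c hc i.
have h0 : \sum_i c i *: G i = 0.
  by rewrite -[RHS]hc; apply: eq_bigr => j _; rewrite spanF_nth.
have := pert_core c; rewrite h0 subr0 => h.
have hx : nm (\sum_i c i *: F i) = 0.
  apply/eqP; rewrite eq_le nm_ge0 andbT.
  have := nm_ge0 (\sum_i c i *: F i); case/andP: s0 => a b; nra.
by have := ortho_coef hF c i; rewrite (nm_eq0 hx) ip0l => <-.
Qed.

Lemma pert_dim : \dim (spanF G) = p.
Proof. by have := pert_free; rewrite /free size_tuple => /eqP. Qed.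

Lemma pert_b (x : V) : x \in spanF F -> x != 0 ->
  exists y, [/\ y \in spanF G, y != 0 & dFS x y <= phi (p%:R * tau)].
Proof.
move=> xL hx; rewrite (spanF_repr hF xL) in hx *.
exists (\sum_i ip x (F i) *: G i).
have [hy hd] := close_dFS hx s0 (pert_core _).
by split => //; exact: spanF_mem.
Qed.

Lemma pert_c (y : V) : y \in spanF G -> y != 0 ->
  exists x, [/\ x \in spanF F, x != 0 & dFS y x <= phi (p%:R * tau)].
Proof.
move=> /coord_span e hy.
set c := fun i => coord [tuple G i | i < p] i y.
have ey : y = \sum_i c i *: G i.
  by rewrite {1}e; apply: eq_bigr => i _; rewrite spanF_nth.
exists (\sum_i c i *: F i).
have hx : \sum_i c i *: F i != 0.
  apply/eqP => h0; move: hy; rewrite ey; apply/negP; rewrite negbK.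
  have := pert_core c; rewrite h0 nm0 mulr0 sub0r nmN => h.
  by apply/eqP/nm_eq0/eqP; rewrite eq_le h nm_ge0.
have [_ hd] := close_dFS hx s0 (pert_core c).
by split => //; [exact: spanF_mem | move: hd; rewrite -ey dFS_sym].
Qed.

Lemma pert_haus : (0 < p)%N -> dHaus (spanF F) (spanF G) <= phi (p%:R * tau).
Proof.
move=> p0.
have hF0 : F (Ordinal p0) != 0.
  by apply/eqP => h; have := ortho_nm hF (Ordinal p0); rewrite h nm0 => /eqP; rewrite eq_sym oner_eq0.
apply: dHaus_le.
- by exists (F (Ordinal p0)); split => //; exact: spanF_F.
- have [y [? ? _]] := pert_b (spanF_F F (Ordinal p0)) hF0; by exists y.
- exact: pert_b.
- exact: pert_c.
Qed.

End Perturb.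

Section Align.
Variable R : realType.
Variable m : nat.
Local Notation V := 'rV[R[i]]_m.
Local Notation cab := (@ComplexField.Normc.normc R).
Local Notation ip := (@hprod R m).
Local Notation nm := (@vnorm R m).

Lemma CdivR (x y : R) : x%:C / y%:C = (x / y)%:C.
Proof. by rewrite -(fmorphV (real_complex R)) -rmorphM. Qed.

Lemma unit_align (v w : V) : v != 0 -> w != 0 -> 0 < cs v w ->
  exists a, [/\ a != 0, nm (((nm v)^-1)%:C *: v) = 1 &
    nm (a *: w - ((nm v)^-1)%:C *: v) ^+ 2 = 2 - 2 * cs v w].
Proof.
move=> hv hw hc.
have nv := nm_gt0 hv; have nw := nm_gt0 hw.
set u := ((nm v)^-1)%:C *: v.
have nu : nm u = 1 by rewrite /u nmZ cabR ger0_norm ?invr_ge0 ?ltW // mulVf ?gt_eqF.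
set pw := ip w u.
have hpw : cab pw = cs v w * nm w.
  rewrite /pw /u ipZr cabM cabJ cabR ger0_norm ?invr_ge0 ?ltW // /cs (cabipC v w).
  by field; rewrite !gt_eqF.
have pw0 : 0 < cab pw by rewrite hpw mulr_gt0.
have pwn : pw != 0 by apply/eqP => h; move: pw0; rewrite h cab0 ltxx.
set a := conjc pw / ((cab pw * nm w)%:C).
have hd : (cab pw * nm w)%:C != 0.
  by apply/eqP => -[] /eqP; rewrite mulf_eq0 !gt_eqF.
exists a; split => //.
  by rewrite /a mulf_eq0 invr_eq0 negb_or hd andbT conjc_eq0.
have hna : nm (a *: w) = 1.
  rewrite nmZ /a cabM cabJ cabV cabR ger0_norm ?mulr_ge0 ?ltW //.
  by field; rewrite !gt_eqF.
have hip : ip (a *: w) u = (cs v w)%:C.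
  rewrite ipZl /a -/pw mulrAC [conjc pw * pw]mulrC mulJ CdivR.
  by congr (_%:C); rewrite hpw; field; rewrite !gt_eqF.
by rewrite nmB2 hna nu hip /=; ring.
Qed.

End Align.

Lemma open_case (R : realType) (k n : nat) (U : set {vspace 'rV[R[i]]_n.+1})
  (hU : forall L, U L -> isGr R k n L) :
  Gr_open R k n U -> PS_open (Gr_union U).
Proof.
move=> hO v [vn [L UL vL]].
have [eps eps0 heps] := hO L UL.
have [F [hF spF]] := GS_frame' (hU L UL).
have [c [c1 c2 hc]] := acos_small eps0.
set s : R := (1 - c) / 4.
have s0 : 0 < s by rewrite /s divr_gt0 // subr_gt0.
have s4 : 4 * s = 1 - c by rewrite /s mulrC divfK.
have s1 : s <= 1 / 2 by lra.
have kp : (0 : R) < k.+1%:R by rewrite ltr0n.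
set tau := s / k.+1%:R.
have htau : k.+1%:R * tau = s by rewrite /tau mulrC divfK // gt_eqF.
have tau0 : 0 < tau by rewrite /tau divr_gt0.
have taus : tau <= s.
  have k1 : (1:R) <= k.+1%:R by rewrite ler1n.
  rewrite /tau ler_pdivrMr //; nra.
have hphi : phi s < eps.
  apply: hc.
    have h1 : 0 < 1 + s by lra.
    rewrite ltr_pdivlMr //.
    have hh : 0 < (1 - c) * (3 - c) by rewrite mulr_gt0 //; lra.
    nra.
  rewrite ler_pdivrMr ?mul1r; lra.
set t := tau ^+ 2 / 2.
have t0 : 0 < t by rewrite /t divr_gt0 // exprn_gt0.
have t1 : t < 1.
  rewrite /t ltr_pdivrMr // mul1r.
  have : tau <= 1 / 2 by lra.
  have := ltW tau0; nra.
exists (acos (1 - t)); first by rewrite acos_gt0 //; apply/andP; split; lra.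
move=> w wn hd.
have hcs : 1 - t < cs v w.
  rewrite ltNge; apply/negP => h.
  have /andP[hl hr] := cs_in vn wn.
  have h2 : 1 - t <= 1 by lra.
  have := acos_anti hl h h2; rewrite -dFSE => h3.
  by move: hd; rewrite ltNge h3.
have csp : 0 < cs v w by lra.
have [a [an nu ha]] := unit_align vn wn csp.
set u := ((vnorm v)^-1)%:C *: v in nu ha.
set wh := a *: w in ha.
have hwu : vnorm (wh - u) <= tau.
  apply: sq_le; rewrite ?nm_ge0 ?ltW // ha.
  have : tau ^+ 2 = 2 * t by rewrite /t; field.
  lra.
pose G := fun i => F i + hprod (F i) u *: (wh - u).
have hG i : vnorm (G i - F i) <= tau.
  rewrite /G addrC addKr nmZ.
  have h1 : ComplexField.Normc.normc (hprod (F i) u) <= 1.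
    by apply: le_trans (CS _ _) _; rewrite ortho_nm // nu mulr1.
  rewrite -[tau]mul1r; apply: ler_pM; rewrite ?cab_ge0 ?nm_ge0 //.
have hs : k.+1%:R * tau < 1 by rewrite htau; lra.
have hdim := pert_dim hF (ltW tau0) hG hs.
have hh := pert_haus hF (ltW tau0) hG hs (ltn0Sn k).
have UG : U (spanF G).
  apply: (heps (spanF G) hdim); rewrite -spF; apply: le_lt_trans hh _.
  by rewrite htau.
have uL : u \in spanF F by rewrite spF; apply: memvZ.
have e : \sum_i hprod u (F i) *: G i = wh.
  rewrite /G; under eq_bigr do rewrite scalerDr scalerA.
  rewrite big_split /= -(spanF_repr hF uL) -scaler_suml.
  have -> : \sum_i hprod u (F i) * hprod (F i) u = 1.
    have e1 := ortho_nm2 hF (fun i => hprod u (F i)).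
    rewrite -(spanF_repr hF uL) nu expr1n in e1.
    transitivity ((\sum_i ComplexField.Normc.normc (hprod u (F i)) ^+ 2)%:C); last by rewrite -e1.
    rewrite rmorph_sum /=.
    by apply: eq_bigr => i _; rewrite -[hprod (F i) u]ipJ mulJ.
  by rewrite scale1r addrC subrK.
have whG : wh \in spanF G by rewrite -e; exact: spanF_mem.
have wG : w \in spanF G.
  have -> : w = a^-1 *: wh by rewrite /wh scalerA mulVf // scale1r.
  exact: memvZ.
by split => //; exists (spanF G).
Qed.

Section Bessel.
Variable R : realType.
Variable m p : nat.
Local Notation V := 'rV[R[i]]_m.
Local Notation cab := (@ComplexField.Normc.normc R).
Local Notation ip := (@hprod R m).
Local Notation nm := (@vnorm R m).

Definition Qf (w : V) (G : 'I_p -> V) := \sum_i cab (ip w (G i)) ^+ 2.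

Lemma Qf_ge0 w G : 0 <= Qf w G.
Proof. by apply: sumr_ge0 => i _; rewrite sqr_ge0. Qed.

Lemma bessel_span (G : 'I_p -> V) w y : ortho G -> y \in spanF G ->
  cab (ip w y) ^+ 2 <= Qf w G * nm y ^+ 2.
Proof.
move=> hG yG; rewrite (spanF_repr hG yG) ortho_ipr ortho_nm2.
set c := fun i => ip y (G i).
pose a : 'rV[R[i]]_p := \row_i c i.
pose b : 'rV[R[i]]_p := \row_i ip w (G i).
have e1 : \sum_i conjc (c i) * ip w (G i) = hprod b a.
  by rewrite /hprod; apply: eq_bigr => i _; rewrite !mxE mulrC.
have e2 : \sum_i cab (c i) ^+ 2 = vnorm a ^+ 2.
  by rewrite nm2 /nq; apply: eq_bigr => i _; rewrite mxE.
have e3 : Qf w G = vnorm b ^+ 2.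
  by rewrite nm2 /nq /Qf; apply: eq_bigr => i _; rewrite mxE.
rewrite e1 e2 e3 -exprMn ler_pXn2r ?nnegrE ?cab_ge0 ?mulr_ge0 ?nm_ge0 //.
  exact: CS.
exact: hG.
Qed.

Lemma bessel_strict (G : 'I_p -> V) w : ortho G -> w \notin spanF G ->
  Qf w G < nm w ^+ 2.
Proof.
move=> hG wG.
set z := \sum_i ip w (G i) *: G i.
set r := w - z.
have hr j : ip r (G j) = 0 by rewrite /r ipBl ortho_coef // subrr.
have rz : ip r z = 0.
  rewrite /z ortho_ipr // big1 // => i _; by rewrite hr mulr0.
have rn : r != 0.
  apply/eqP => r0; move: wG; have -> : w = z by apply/eqP; rewrite -subr_eq0 -/r r0.
  by rewrite /z spanF_mem.
have ew : w = r + z by rewrite /r subrK.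
rewrite [in X in _ < X]ew nmD2 rz /= /z ortho_nm2 //.
have := nm_gt0 rn.
rewrite /Qf mulr0 addr0 addrC ltrDl => _.
by rewrite exprn_gt0 // nm_gt0.
Qed.

Lemma Qf_cont (F G : 'I_p -> V) w tau : ortho F -> 0 <= tau <= 1 ->
  (forall i, nm (G i - F i) <= tau) ->
  Qf w G <= Qf w F + p%:R * (3 * tau * nm w ^+ 2).
Proof.
move=> hF /andP[t0 t1] hGF.
have -> : Qf w F + p%:R * (3 * tau * nm w ^+ 2) =
  \sum_(i < p) (cab (ip w (F i)) ^+ 2 + 3 * tau * nm w ^+ 2).
  by rewrite /Qf big_split /= sumr_const card_ord mulr_natl.
apply: ler_sum => i _.
have ha : cab (ip w (F i)) <= nm w.
  by apply: le_trans (CS _ _) _; rewrite ortho_nm // mulr1.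
have hb : cab (ip w (G i)) <= cab (ip w (F i)) + nm w * tau.
  have -> : ip w (G i) = ip w (F i) + ip w (G i - F i) by rewrite ipBr addrC subrK.
  apply: le_trans (cabD _ _) _; rewrite lerD2l.
  by apply: le_trans (CS _ _) _; apply: ler_wpM2l; rewrite ?nm_ge0.
have h0 := cab_ge0 (ip w (G i)); have h1 := cab_ge0 (ip w (F i)).
have h2 := nm_ge0 w.
have : cab (ip w (G i)) ^+ 2 <= (cab (ip w (F i)) + nm w * tau) ^+ 2.
  by rewrite ler_pXn2r ?nnegrE // addr_ge0 // mulr_ge0.
have : nm w * tau * (nm w * tau) <= nm w * tau * nm w.
  by apply: ler_wpM2l; rewrite ?mulr_ge0 // -[X in _ <= X]mulr1 ler_wpM2l.
have : cab (ip w (F i)) * (nm w * tau) <= nm w * (nm w * tau).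
  by apply: ler_wpM2r; rewrite ?mulr_ge0.
nra.
Qed.

End Bessel.

Import numFieldTopology.Exports.
Import ArrowAsProduct.
Local Open Scope classical_set_scope.
Section Top.
Variable R : realType.
Variables p m : nat.
Local Notation V := 'rV[R[i]]_m.
Local Notation cab := (@ComplexField.Normc.normc R).
Local Notation ip := (@hprod R m).
Local Notation nm := (@vnorm R m).

Local Notation Idx := ('I_p * 'I_m * bool)%type.

Definition frame (f : Idx -> R) : 'I_p -> V :=
  fun i => \row_j ((f (i, j, false)) +i* (f (i, j, true)))%C.

Definition enc (F : 'I_p -> V) : Idx -> R := fun x =>
  if x.2 then complex.Im (F x.1.1 ord0 x.1.2) else complex.Re (F x.1.1 ord0 x.1.2).

Lemma frame_enc F : frame (enc F) = F.
Proof.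
apply: funext => i; apply/rowP => j; rewrite mxE /enc /=.
by case: (F i ord0 j).
Qed.

Definition box : set (Idx -> R) := [set f | forall x, `[-1, 1]%classic (f x)].

Lemma box_compact : compact box.
Proof. exact: (@tychonoff Idx (fun _ => R) (fun _ => `[-1, 1]%classic) (fun _ => @segment_compact R (-1) 1)). Qed.

Lemma enc_box F : ortho F -> box (enc F).
Proof.
move=> hF [[i j] b]; rewrite /= in_itv /= -ler_norml /enc /=.
have h := entry_le (F i) j; rewrite ortho_nm // in h.
case: b => /=; apply: le_trans h; [exact: absImLe | exact: absReLe].
Qed.

Lemma nbhs_box (f0 : Idx -> R) (rho : R) : 0 < rho ->
  nbhs f0 [set f : Idx -> R | forall x, `|f x - f0 x| < rho].
Proof.
move=> r0.
have H : forall x : Idx, \forall g \near f0, `|g x - f0 x| < rho.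
  move=> x; apply: (@proj_continuous Idx (fun _ => R) x f0 [set r | `|r - f0 x| < rho]).
  by apply/nbhs_ballP; exists rho => //= r; rewrite /ball /= distrC.
have H2 := filter_forall _ H.
exact: (H2 _).
Qed.

Lemma frame_close (f f0 : Idx -> R) (rho tau : R) : 0 <= tau ->
  2 * m%:R * rho ^+ 2 <= tau ^+ 2 ->
  (forall x, `|f x - f0 x| < rho) -> forall i, nm (frame f i - frame f0 i) <= tau.
Proof.
move=> t0 hr hf i; apply: nm_le_of_nq => //.
apply: le_trans hr; rewrite /nq.
have -> : 2 * m%:R * rho ^+ 2 = \sum_(j < m) (2 * rho ^+ 2).
  by rewrite sumr_const card_ord mulr_natl; ring.
apply: ler_sum => j _; rewrite cab_sq !mxE /=.
have h1 := hf (i, j, false); have h2 := hf (i, j, true).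
have e1 : (f (i, j, false) - f0 (i, j, false)) ^+ 2 <= rho ^+ 2.
  by rewrite -real_normK ?num_real // ler_pXn2r ?nnegrE // ltW // (le_lt_trans _ h1).
have e2 : (f (i, j, true) - f0 (i, j, true)) ^+ 2 <= rho ^+ 2.
  by rewrite -real_normK ?num_real // ler_pXn2r ?nnegrE // ltW // (le_lt_trans _ h2).
lra.
Qed.

End Top.

Section NearOrtho.
Variable R : realType.
Variable m p : nat.
Local Notation V := 'rV[R[i]]_m.
Local Notation cab := (@ComplexField.Normc.normc R).
Local Notation ip := (@hprod R m).
Local Notation nm := (@vnorm R m).

Lemma not_ortho_near (G0 : 'I_p -> V) : ~ ortho G0 ->
  exists2 tau : R, 0 < tau & forall G, (forall i, nm (G i - G0 i) <= tau) -> ~ ortho G.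
Proof.
move=> hn.
have [i [j hij]] : exists i j, ip (G0 i) (G0 j) != (i == j)%:R.
  apply: contrapT => h; apply: hn => i j; apply/eqP; apply: contrapT => hij.
  by apply: h; exists i, j; apply/negP.
set d := cab (ip (G0 i) (G0 j) - (i == j)%:R).
have d0 : 0 < d.
  rewrite lt_def cab_ge0 andbT; apply/eqP => /cab_eq0 /eqP.
  by rewrite subr_eq0 (negbTE hij).
set A := nm (G0 i) + nm (G0 j) + 1.
have A0 : 0 < A by rewrite /A ltr_pwDr // addr_ge0 // nm_ge0.
set tau := Num.min 1 (d / (2 * A)).
have t0 : 0 < tau by rewrite lt_min ltr01 divr_gt0 // mulr_gt0.
have t1 : tau <= 1 by rewrite ge_min lexx.
have t2 : tau * A <= d / 2.
  have : tau <= d / (2 * A) by rewrite ge_min lexx orbT.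
  rewrite ler_pdivlMr ?mulr_gt0 // => h.
  rewrite ler_pdivlMr //; lra.
exists tau => // G hG hoG.
have e : ip (G i) (G j) - ip (G0 i) (G0 j) =
  ip (G i - G0 i) (G j) + ip (G0 i) (G j - G0 j).
  by rewrite ipBl ipBr addrA subrK.
have hGj : nm (G j) <= nm (G0 j) + tau.
  have -> : G j = G0 j + (G j - G0 j) by rewrite addrC subrK.
  by apply: le_trans (nmD _ _) _; rewrite lerD2l.
have hb : cab (ip (G i) (G j) - ip (G0 i) (G0 j)) <= tau * A.
  rewrite e; apply: le_trans (cabD _ _) _.
  have h1 := CS (G i - G0 i) (G j); have h2 := CS (G0 i) (G j - G0 j).
  have h3 := hG i; have h4 := hG j.
  have n1 := nm_ge0 (G i - G0 i); have n2 := nm_ge0 (G j - G0 j).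
  have n3 := nm_ge0 (G0 i); have n4 := nm_ge0 (G0 j); have n5 := nm_ge0 (G j).
  have q1 : nm (G i - G0 i) * nm (G j) <= tau * (nm (G0 j) + tau).
    by apply: ler_pM.
  have q2 : nm (G0 i) * nm (G j - G0 j) <= nm (G0 i) * tau.
    by apply: ler_wpM2l.
  rewrite /A; nra.
move: hb; rewrite hoG -opprB cabN -/d; lra.
Qed.

End NearOrtho.

Lemma near2_sets (R : realType) (T : topologicalType) (f0 : T) (Q : T -> R -> Prop)
  (N : set T) (B : set R) :
  nbhs f0 N -> (0:R)^'+ B -> (forall f e, N f -> B e -> Q f e) ->
  \forall f \near f0 & e \near (0:R)^'+, Q f e.
Proof.
move=> hN hB h; exists (N, B) => //=.
by move=> [f e] /= [hf he]; exact: h.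
Qed.

Lemma choose_tau (R : realType) (p : nat) (eps : R) : 0 < eps ->
  exists2 tau : R, 0 < tau & [/\ tau <= 1, p.+1%:R * tau < 1 & phi (p.+1%:R * tau) < eps].
Proof.
move=> eps0.
have [c [c1 c2 hc]] := acos_small eps0.
set s : R := (1 - c) / 4.
have s0 : 0 < s by rewrite /s divr_gt0 // subr_gt0.
have s4 : 4 * s = 1 - c by rewrite /s mulrC divfK.
have s1 : s <= 1 / 2 by lra.
have kp : (0 : R) < p.+1%:R by rewrite ltr0n.
set tau := s / p.+1%:R.
have htau : p.+1%:R * tau = s by rewrite /tau mulrC divfK // gt_eqF.
have tau0 : 0 < tau by rewrite /tau divr_gt0.
have taus : tau <= s.
  have k1 : (1:R) <= p.+1%:R by rewrite ler1n.
  rewrite /tau ler_pdivrMr //; nra.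
exists tau => //; split; rewrite ?htau; try lra.
apply: hc.
  have h1 : 0 < 1 + s by lra.
  rewrite ltr_pdivlMr //.
  have hh : 0 < (1 - c) * (3 - c) by rewrite mulr_gt0 //; lra.
  nra.
rewrite ler_pdivrMr ?mul1r; lra.
Qed.

Lemma closed_case (R : realType) (k n : nat) (U : set {vspace 'rV[R[i]]_n.+1})
  (hU : forall L, U L -> isGr R k n L) :
  Gr_closed R k n U -> PS_closed (Gr_union U).
Proof.
move=> hC w [wn hw].
have nw := nm_gt0 wn.
pose fr := @frame R k.+1 n.+1.
pose P (e : R) (f : ('I_k.+1 * 'I_n.+1 * bool)%type -> R) :=
  ortho (fr f) -> U (spanF (fr f)) ->
  forall y, y \in spanF (fr f) -> y != 0 -> e <= dFS w y.
have mpos : (0 : R) < n.+1%:R by rewrite ltr0n.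
(* radius in coordinates from a radius for vectors *)
have rho_of : forall tau : R, 0 < tau -> exists2 rho : R, 0 < rho &
    2 * n.+1%:R * rho ^+ 2 <= tau ^+ 2.
  move=> tau t0; exists (tau / (2 * n.+1%:R)); first by rewrite divr_gt0 // mulr_gt0.
  have m1 : (1 : R) <= n.+1%:R by rewrite ler1n.
  have -> : 2 * n.+1%:R * (tau / (2 * n.+1%:R)) ^+ 2 = tau ^+ 2 / (2 * n.+1%:R).
    by field; rewrite gt_eqF.
  rewrite ler_pdivrMr ?mulr_gt0 //.
  have : 0 <= tau ^+ 2 by rewrite sqr_ge0.
  nra.
have loc : forall f0, box f0 -> \forall f \near f0 & e \near (0:R)^'+, P e f.
  move=> f0 _.
  case: (pselect (ortho (fr f0))) => ho; last first.
    have [tau t0 ht] := not_ortho_near ho.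
    have [rho r0 hr] := rho_of tau t0.
    apply: (@near2_sets R _ f0 (fun f e => P e f) _ setT (nbhs_box f0 r0)); first exact: filterT.
    move=> f e hf _ hof.
    exfalso; apply: (ht (fr f)) => //.
    exact: (frame_close (ltW t0) hr hf).
  case: (pselect (U (spanF (fr f0)))) => hu.
    have wF : w \notin spanF (fr f0).
      by apply/negP => wF; apply: hw; split => //; exists (spanF (fr f0)).
    have hq := bessel_strict ho wF.
    set d := vnorm w ^+ 2 - Qf w (fr f0).
    have d0 : 0 < d by rewrite /d subr_gt0.
    have nw2 : 0 < vnorm w ^+ 2 by rewrite exprn_gt0.
    have kp : (0 : R) < k.+1%:R by rewrite ltr0n.
    set tau := Num.min 1 (d / (6 * k.+1%:R * vnorm w ^+ 2)).
    have t0 : 0 < tau by rewrite lt_min ltr01 divr_gt0 // !mulr_gt0.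
    have t1 : tau <= 1 by rewrite ge_min lexx.
    have t2 : k.+1%:R * (3 * tau * vnorm w ^+ 2) <= d / 2.
      have : tau <= d / (6 * k.+1%:R * vnorm w ^+ 2) by rewrite ge_min lexx orbT.
      rewrite ler_pdivlMr ?mulr_gt0 // => h.
      rewrite ler_pdivlMr //; nra.
    set th := (Qf w (fr f0) + d / 2) / vnorm w ^+ 2.
    have th1 : th < 1.
      rewrite /th ltr_pdivrMr // mul1r /d; lra.
    have th0 : 0 <= th by rewrite /th divr_ge0 ?addr_ge0 ?Qf_ge0 ?ltW // divr_gt0.
    set q := (1 + th) / 2.
    have q1 : q < 1 by rewrite /q; lra.
    have q0 : -1 <= q by rewrite /q; lra.
    have r0 : 0 < acos q by apply: acos_gt0; rewrite q0.
    have [rho rh0 hr] := rho_of tau t0.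
    apply: (@near2_sets R _ f0 (fun f e => P e f) _ _ (nbhs_box f0 rh0) (nbhs_right_lt r0)).
    move=> f e hf he hof _ y yF yn.
    have hGF := frame_close (ltW t0) hr hf.
    have hQ := Qf_cont w ho (_ : 0 <= tau <= 1) hGF.
    have hB := bessel_span w hof yF.
    have yn0 := nm_gt0 yn.
    have hth : th * vnorm w ^+ 2 = Qf w (fr f0) + d / 2 by rewrite /th divfK // gt_eqF.
    have hc2 : cs w y ^+ 2 <= th.
      rewrite /cs expr_div_n ler_pdivrMr ?exprn_gt0 ?mulr_gt0 //.
      apply: le_trans hB _.
      have hq' : Qf w (fr f) <= th * vnorm w ^+ 2.
        rewrite hth; apply: le_trans (hQ _) _; first by rewrite (ltW t0) t1.
        lra.
      have := sqr_ge0 (vnorm y); nra.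
    have hcs0 := cs_ge0 w y.
    have hcq : cs w y <= q.
      rewrite leNgt; apply/negP => h.
      have : q ^+ 2 < cs w y ^+ 2.
        by rewrite ltr_pXn2r ?nnegrE //; rewrite /q; lra.
      have : th <= q ^+ 2 by rewrite /q; nra.
      lra.
    have /andP[cl cr] := cs_in wn yn.
    have := acos_anti cl hcq (ltW q1); rewrite -dFSE.
    move: he => /= he; lra.
  have hL0 : isGr R k n (spanF (fr f0)) by rewrite /isGr ortho_dim.
  have [eps eps0 heps] := hC (spanF (fr f0)) (conj hL0 hu).
  have [tau t0 [t1 hs hphi]] := choose_tau k eps0.
  have [rho rh0 hr] := rho_of tau t0.
  apply: (@near2_sets R _ f0 (fun f e => P e f) _ setT (nbhs_box f0 rh0)); first exact: filterT.
  move=> f e hf _ hof hUf.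
  have hGF := frame_close (ltW t0) hr hf.
  have hh := pert_haus ho (ltW t0) hGF hs (ltn0Sn k).
  have hdim := pert_dim ho (ltW t0) hGF hs.
  have [_ hnU] := heps (spanF (fr f)) hdim (le_lt_trans hh hphi).
  by exfalso; apply: hnU.
have hcov := (proj1 (compact_near_coveringP (@box R k.+1 n.+1))) (@box_compact R k.+1 n.+1) R (0:R)^'+ P _ loc.
have h2 := filterI (hcov _) (nbhs_right_gt 0).
have h3 : (0:R)^'+ ((fun e => @box R k.+1 n.+1 `<=` P e) `&` (fun y => 0 < y)).
  by apply: h2.
have [e [he e0]] := filter_ex h3.
exists e => // w' w'n hd; split => //; move=> [_ [L UL w'L]].
have [F [hF spF]] := GS_frame' (hU L UL).
have := he _ (enc_box hF); rewrite /P /fr frame_enc spF => /(_ hF UL w' w'L w'n).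
by move: hd; rewrite ltNge => /negP.
Qed.

End Dev.
Import Dev.

Theorem mainTheorem18 (R : realType) (k n : nat) (hkn : (k < n)%N)
  (U : set {vspace 'rV[R[i]]_n.+1}) (hU : forall L, U L -> isGr R k n L) :
  (Gr_open R k n U -> PS_open (Gr_union U)) /\
  (Gr_closed R k n U -> PS_closed (Gr_union U)).
Proof.
split; [exact: open_case | exact: closed_case].
Qed.
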